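(* For $1\le p\le n$ let $M_{np}=\chi_n(\pi,p)$ where $\pi$ is uniform on $\mathfrak S_n$, and $\phi_{np}(u)=\sum_{l\ge0}\mathbb P(M_{np}=l)u^l$. Then $$\phi_{np}(u)=\frac{p}{n}\phi_{pp}(u)+\Bigl(1-\frac pn\Bigr)u,\qquad \phi_{nn}(u)=\frac un\Bigl[1+\sum_{p=1}^{n-1}\phi_{n-1,p}(u)\Bigr]\ (n\ge2),$$ and explicitly $$\phi_{np}(u)=\frac{n-p+1}{n}\,u+\frac pn\,\frac{u^2}{2-u}\Bigl[1-\frac{u(u+1)\cdots(u+p-2)}{p!}\Bigr],$$ where the product $u(u+1)\cdots(u+p-2)$ is empty (equal to $1$) when $p=1$.
   Context: $[n]=\{1,\dots,n\}$, $\mathfrak S_n$ the symmetric group on $[n]$, right action $i\pi$, products composed left to right; $\tau(i,j)$ the transposition exchanging $i,j$ ($\tau(n,n)$ the identity). For $\pi\in\mathfrak S_n$ let $q(\pi)=n\pi^{-1}$, and for $n\ge2$ let $\downarrow\pi\in\mathfrak S_{n-1}$ be the restriction to $[n-1]$ of $\tau(n,q(\pi))\pi$. The ''number of moves'' function $\chi_n(\pi,p)$, $\pi\in\mathfrak S_n$, $p\in[n]$, is defined recursively: $\chi_1(\mathrm{id},1)=1$; for $n\ge2$, with $q=q(\pi)$: $\chi_n(\pi,p)=\chi_{n-1}(\downarrow\pi,p)$ if $p\ne n,p\ne q$; $=1+\chi_{n-1}(\downarrow\pi,q)$ if $p=n\ne q$; $=1$ if $p=q\ne n$; $=1$ if $p=q=n$.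 *)

(* Defs.v *)
From mathcomp Require Import all_boot all_order all_algebra all_fingroup.
Set Implicit Arguments. Unset Strict Implicit. Unset Printing Implicit Defensive.
Import Order.TTheory GRing.Theory Num.Theory.

(* A permutation of [n] = {1..n} is encoded as a function nat -> nat whose
   values on 1..n matter.  [chi n f p] is the paper's chi_n(pi,p) where
   i pi = f i for i in [n] (right action). *)

Definition qpi (n : nat) (f : nat -> nat) : nat :=
  (find (fun i => f i == n) (iota 1 n)).+1.

Definition tau (a b i : nat) : nat :=
  if i == a then b else if i == b then a else i.

(* down pi = restriction of tau(n,q) pi (products left to right:
   i (tau pi) = (i tau) pi). *)
Definition down (n : nat) (f : nat -> nat) : nat -> nat :=
  fun i => f (tau n (qpi n f) i).

Fixpoint chi (n : nat) (f : nat -> nat) (p : nat) {struct n} : nat :=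
  match n with
  | 0 => 0
  | n'.+1 =>
      if n' is 0 then 1
      else
      let q := qpi n f in
      if (p != n) && (p != q) then chi n' (down n f) p
      else if (p == n) && (p != q) then (chi n' (down n f) q).+1
      else 1
  end.

(* 1-based view of pi : 'S_n (i in [n] corresponds to the ordinal i-1). *)
Definition perm_fun (n : nat) (pi : 'S_n) : nat -> nat :=
  fun i => match (insub i.-1 : option 'I_n) with
           | Some j => (pi j).+1
           | None => i
           end.

Definition chiP (n : nat) (pi : 'S_n) (p : nat) : nat := chi n (perm_fun pi) p.

Local Open Scope ring_scope.

Definition probM (R : numFieldType) (n p l : nat) : R :=
  #|[set pi : 'S_n | chiP pi p == l]|%:R / (n`!)%:R.

(* phi_{np}(u) = sum_{l>=0} P(M_{np}=l) u^l ; M_{np} takes values in 0..n,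
   so the sum over l <= n is the full series. *)
Definition phi (R : numFieldType) (n p : nat) (u : R) : R :=
  \sum_(l < n.+1) probM R n p l * u ^+ l.

(* Main.v *)
Require Import Defs.
From mathcomp Require Import all_boot all_order all_algebra all_fingroup.
From mathcomp Require Import zify ring.
Set Implicit Arguments. Unset Strict Implicit. Unset Printing Implicit Defensive.
Import Order.TTheory GRing.Theory Num.Theory.

Lemma qpi_ext n f g : (forall i, 1 <= i <= n -> f i = g i) -> qpi n f = qpi n g.
Proof.
move=> E; rewrite /qpi; congr _.+1; apply: eq_in_find => i.
rewrite mem_iota => /andP[h1 h2]; rewrite E //; apply/andP; lia.
Qed.

Lemma chiSS n f p : chi n.+2 f p =
  if (p != n.+2) && (p != qpi n.+2 f) then chi n.+1 (down n.+2 f) p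
  else if (p == n.+2) && (p != qpi n.+2 f) then (chi n.+1 (down n.+2 f) (qpi n.+2 f)).+1
  else 1.
Proof. by []. Qed.

Lemma qpi_le n f : qpi n f <= n.+1.
Proof. rewrite /qpi; have := find_size (fun i => f i == n) (iota 1 n); rewrite size_iota; lia. Qed.

Lemma chi_ext n f g p : (forall i, 1 <= i <= n -> f i = g i) ->
  chi n f p = chi n g p.
Proof.
elim: n f g p => [//|[|n] IH] f g p E //.
rewrite !chiSS -(qpi_ext E).
have D: forall i, 1 <= i <= n.+1 -> down n.+2 f i = down n.+2 g i.
  move=> i hi; rewrite /down -(qpi_ext E) E // /tau.
  have := qpi_le n.+2 f.
  case: eqP => e1; first lia.
  case: eqP => e2; lia.
by rewrite !(IH _ _ _ D).
Qed.

Lemma chi_le n f p : chi n f p <= n.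
Proof.
elim: n f p => [//|[|n] IH] f p //.
rewrite chiSS; case: ifP => _; first exact: leqW.
case: ifP => _ //. by rewrite ltnS.
Qed.

Lemma qpi_spec n f q : 1 <= q <= n -> f q = n ->
  (forall i, 1 <= i < q -> f i != n) -> qpi n f = q.
Proof.
move=> /andP[q1 qn] fq H; rewrite /qpi.
have -> : iota 1 n = iota 1 q.-1 ++ (q :: iota q.+1 (n - q)).
  have -> : n = q.-1 + (n - q).+1 by lia.
  rewrite iotaD; congr (_ ++ _); rewrite /=; congr (_ :: _); [lia|congr iota; lia].
rewrite find_cat /= fq eqxx.
case: ifP.
  case/hasP => i; rewrite mem_iota => hi /=; by rewrite (negbTE (H i _)) //; lia.
by rewrite size_iota addn0; lia.
Qed.

Lemma perm_funE n (pi : 'S_n) (k : 'I_n) i : i = k.+1 -> perm_fun pi i = (pi k).+1.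
Proof. by move=> ->; rewrite /perm_fun /= valK. Qed.

Lemma lift_maxv n (k : 'I_n) : \val (lift ord_max k) = \val k.
Proof. exact: lift_max. Qed.

Definition hperm n (j : 'I_n.+1) (s : 'S_n) : 'S_n.+1 :=
  tperm ord_max j * lift_perm ord_max ord_max s.

Lemma hpermE n (j : 'I_n.+1) (s : 'S_n) x : hperm j s x = lift_perm ord_max ord_max s (tperm ord_max j x).
Proof. by rewrite /hperm permM. Qed.

Lemma hperm_j n j (s : 'S_n) : hperm j s j = ord_max.
Proof. by rewrite hpermE tpermR lift_perm_id. Qed.

Lemma hperm_lift n (j : 'I_n.+1) (s : 'S_n) (k : 'I_n) : val j != val k ->
  hperm j s (lift ord_max k) = lift ord_max (s k).
Proof.
move=> jk; rewrite hpermE tpermD ?lift_perm_lift //; first exact: neq_lift.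
by apply: contra jk => /eqP ->; apply/eqP; exact: lift_max.
Qed.

Lemma hperm_max n (j : 'I_n.+1) (s : 'S_n) (k : 'I_n) : val j = val k ->
  hperm j s ord_max = lift ord_max (s k).
Proof.
move=> jk; rewrite hpermE tpermL.
have -> : j = lift ord_max k by apply: val_inj; rewrite lift_maxv.
by rewrite lift_perm_lift.
Qed.

Lemma qpi_hperm n j (s : 'S_n) : qpi n.+1 (perm_fun (hperm j s)) = j.+1.
Proof.
apply: qpi_spec.
- by rewrite ltn_ord.
- by rewrite (perm_funE _ (k := j)) // hperm_j.
move=> i /andP[i1 ij].
have ik : i.-1 < n.+1 by have := ltn_ord j; lia.
rewrite (perm_funE _ (k := Ordinal ik)) /=; last lia.
rewrite eqSS; apply/eqP => e.
have : hperm j s (Ordinal ik) = hperm j s j by apply: val_inj; rewrite hperm_j /= e.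
move/perm_inj => /(congr1 val) /=; lia.
Qed.

Lemma down_hperm n j (s : 'S_n) i : 1 <= i <= n ->
  down n.+1 (perm_fun (hperm j s)) i = perm_fun s i.
Proof.
move=> /andP[i1 iN].
have ik : i.-1 < n by lia.
rewrite /down qpi_hperm (perm_funE s (k := Ordinal ik)); last by rewrite /=; lia.
rewrite /tau; case: eqP => e1; first lia.
case: eqP => e2.
  rewrite (perm_funE _ (k := ord_max)) //.
  rewrite (@hperm_max n j s (Ordinal ik)) ?lift_maxv //=; lia.
rewrite (perm_funE _ (k := lift ord_max (Ordinal ik))); last by rewrite lift_max /=; lia.
rewrite hperm_lift ?lift_max //=; apply/eqP; lia.
Qed.

Lemma chiP_hperm n j (s : 'S_n) p : 1 <= n ->
  chiP (hperm j s) p =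
  if (p != n.+1) && (p != j.+1) then chiP s p
  else if (p == n.+1) && (p != j.+1) then (chiP s j.+1).+1 else 1.
Proof.
case: n j s => [//|n] j s _.
rewrite /chiP chiSS qpi_hperm.
by rewrite !(@chi_ext n.+1 (down n.+2 (perm_fun (hperm j s))) (perm_fun s)) //;
  move=> i; apply: down_hperm.
Qed.

Lemma hperm_inj n : injective (fun x : 'I_n.+1 * 'S_n => hperm x.1 x.2).
Proof.
move=> [j s] [j' s'] /= e.
have ej : j = j'.
  apply: (@perm_inj _ (hperm j s)); rewrite hperm_j e hperm_j //.
subst j'; congr (_, _); apply/permP => k.
have := congr1 (fun t : 'S_n.+1 => t (tperm ord_max j (lift ord_max k))) e.
rewrite /= !hpermE tpermK !lift_perm_lift; exact: lift_inj.
Qed.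

Lemma hperm_bij n : bijective (fun x : 'I_n.+1 * 'S_n => hperm x.1 x.2).
Proof.
apply: inj_card_bij; first exact: hperm_inj.
by rewrite card_prod card_ord !card_Sn factS.
Qed.
Local Open Scope ring_scope.

Section Real.
Variable R : numFieldType.

Definition S (n p : nat) (u : R) := \sum_(pi : 'S_n) u ^+ chiP pi p.

Lemma fact_neq0 n : (n`!)%:R != 0 :> R.
Proof. by rewrite pnatr_eq0 -lt0n fact_gt0. Qed.

Lemma phiS n p u : phi n p u = S n p u / (n`!)%:R.
Proof.
rewrite /phi /S /probM.
have -> : \sum_(pi : 'S_n) u ^+ chiP pi p =
   \sum_(pi : 'S_n) \sum_(l < n.+1) (if chiP pi p == l then u ^+ l else 0).
  apply: eq_bigr => pi _; rewrite -big_mkcond /=.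
  rewrite (big_pred1 (inord (chiP pi p))) ?inordK ?ltnS ?chi_le //.
  move=> l /=; apply/eqP/eqP => [e|->]; first by apply: val_inj; rewrite /= inordK ?ltnS ?chi_le.
  by rewrite inordK ?ltnS ?chi_le.
rewrite exchange_big /= mulr_suml; apply: eq_bigr => l _.
rewrite -big_mkcond /= sumr_const cardsE -mulr_natl; field; exact: fact_neq0.
Qed.

Lemma S_split n p u : S n.+1 p u =
  \sum_(j < n.+1) \sum_(s : 'S_n) u ^+ chiP (hperm j s) p.
Proof.
rewrite /S (reindex (fun x : 'I_n.+1 * 'S_n => hperm x.1 x.2)) /=; last first.
  by apply: onW_bij; apply: hperm_bij.
by rewrite [RHS]pair_big.
Qed.

Lemma S_rec_lt n p u : (1 <= n)%N -> (1 <= p <= n)%N ->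
  S n.+1 p u = (n`!)%:R * u + n%:R * S n p u.
Proof.
move=> n1 /andP[p1 pn].
rewrite S_split.
have pj : (p.-1 < n.+1)%N by lia.
rewrite (bigD1 (Ordinal pj)) //=; congr (_ + _).
  transitivity (\sum_(s : 'S_n) u); last by rewrite sumr_const card_Sn mulr_natl.
  apply: eq_bigr => s _; rewrite chiP_hperm //=.
  have -> : p.-1.+1 = p by lia.
  by rewrite eqxx !andbF.
transitivity (\sum_(j < n.+1 | j != Ordinal pj) S n p u); last first.
  by rewrite sumr_const cardC1 card_ord /= mulr_natl.
apply: eq_bigr => j jn; apply: eq_bigr => s _; rewrite chiP_hperm //.
have -> : (p != n.+1) = true by apply/eqP; lia.
have -> : (p != j.+1) = true.
  apply/eqP => e; move: jn; have -> : j = Ordinal pj by apply: val_inj => /=; lia.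
  by rewrite eqxx.
by [].
Qed.

Lemma S_rec_eq n u : (1 <= n)%N ->
  S n.+1 n.+1 u = (n`!)%:R * u + u * \sum_(j < n) S n j.+1 u.
Proof.
move=> n1; rewrite S_split big_ord_recr /= addrC; congr (_ + _).
  transitivity (\sum_(s : 'S_n) u); last by rewrite sumr_const card_Sn mulr_natl.
  by apply: eq_bigr => s _; rewrite chiP_hperm //= eqxx.
rewrite mulr_sumr; apply: eq_bigr => j _; rewrite /S mulr_sumr; apply: eq_bigr => s _.
rewrite chiP_hperm // eqxx /=.
have -> : (n.+1 != j.+1) = true by apply/eqP; have := ltn_ord j; lia.
by rewrite exprS.
Qed.

Lemma S_one u : S 1 1 u = u.
Proof. by rewrite /S (eq_bigr (fun _ => u)) // sumr_const card_Sn. Qed.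

Lemma addnat_neq0 k n : (0 < k)%N -> (k%:R + n%:R) != 0 :> R.
Proof. by move=> k0; rewrite -natrD pnatr_eq0 addn_eq0 negb_and -lt0n k0. Qed.

Lemma add1nat_neq0 n : (1 + n%:R) != 0 :> R.
Proof. by rewrite nat1r pnatr_eq0. Qed.

Lemma natS_neq0 n : (n.+1)%:R != 0 :> R.
Proof. by rewrite pnatr_eq0. Qed.

Lemma phi_rec_lt n p (u : R) : (1 <= n)%N -> (1 <= p <= n)%N ->
  phi n.+1 p u = u / (n.+1)%:R + n%:R / (n.+1)%:R * phi n p u.
Proof.
move=> n1 pn; rewrite !phiS S_rec_lt // factS natrM.
have := fact_neq0 n; have := natS_neq0 n => h1 h2.
field; by rewrite h2 nat1r h1.
Qed.

Lemma phi_rec_eq n (u : R) : (1 <= n)%N ->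
  phi n.+1 n.+1 u = u / (n.+1)%:R * (1 + \sum_(1 <= p < n.+1) phi n p u).
Proof.
move=> n1; rewrite !phiS S_rec_eq // factS natrM.
rewrite big_add1 /= big_mkord.
under [X in _ = _ * (1 + X)]eq_bigr do rewrite phiS.
rewrite -mulr_suml.
have := fact_neq0 n; have := natS_neq0 n => h1 h2.
field; by rewrite h2 nat1r h1.
Qed.

Lemma phi_one (u : R) : phi 1 1 u = u.
Proof. by rewrite phiS S_one /= divr1. Qed.

Lemma sumq_nat m : ((\sum_(1 <= q < m.+1) q) * 2 = m * m.+1)%N.
Proof.
elim: m => [|m IH]; first by rewrite big_geq.
rewrite big_nat_recr //= mulnDl IH; lia.
Qed.

Lemma sumrev_nat m : (\sum_(1 <= q < m.+1) (m - q).+1 = \sum_(1 <= q < m.+1) q)%N.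
Proof.
rewrite big_nat_rev /=; apply: eq_big_nat => i /andP[i1 im]; lia.
Qed.

Definition P (p : nat) (u : R) := \prod_(0 <= k < p.-1) (u + k%:R).
Definition Q (m : nat) (u : R) := \prod_(1 <= k < m) (u + k%:R).

Lemma PQ m (u : R) : (1 <= m)%N -> P m.+1 u = u * Q m u.
Proof. by move=> m1; rewrite /P /Q /= big_ltn // addr0. Qed.

Lemma QS m (u : R) : (1 <= m)%N -> Q m.+1 u = Q m u * (u + m%:R).
Proof. by move=> m1; rewrite /Q big_nat_recr. Qed.

Lemma sumqP m (u : R) : (1 <= m)%N ->
  \sum_(1 <= q < m.+1) q%:R * (P q u / (q`!)%:R) = Q m u / ((m.-1)`!)%:R.
Proof.
elim: m => [//|m IH] _.
case: m IH => [|m] IH.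
  by rewrite big_nat1 /P /Q !big_geq //= !divr1 mul1r.
rewrite big_nat_recr //= IH // (@PQ m.+1) // (@QS m.+1) //=.
rewrite !factS !natrM.
have h0 := fact_neq0 m; have h1 := natS_neq0 m; have h2 := natS_neq0 m.+1.
field; by rewrite h0 ?addnat_neq0 ?add1nat_neq0.
Qed.

Definition F (n p : nat) (u : R) :=
       (n - p).+1%:R / n%:R * u
       + p%:R / n%:R * (u ^+ 2 / (2 - u))
         * (1 - (\prod_(0 <= k < p.-1) (u + k%:R)) / (p`!)%:R).

Lemma sumF m (u : R) : (1 <= m)%N ->
  \sum_(1 <= q < m.+1) F m q u =
  (m.+1)%:R / 2 * (u + u ^+ 2 / (2 - u)) - u ^+ 2 / (2 - u) * (Q m u / (m`!)%:R).
Proof.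
move=> m1; set w := u ^+ 2 / (2 - u).
have hm : m%:R != 0 :> R by rewrite pnatr_eq0 -lt0n.
transitivity (\sum_(1 <= q < m.+1) (u / m%:R * ((m - q).+1)%:R + w / m%:R * q%:R
    - w / m%:R * (q%:R * (P q u / (q`!)%:R)))).
  apply: eq_bigr => q _; rewrite /F /P -/w; ring.
rewrite sumrB big_split /= -!mulr_sumr -!natr_sum sumrev_nat sumqP //.
have hq : (\sum_(1 <= q < m.+1) q)%:R = (m * m.+1)%:R / 2 :> R.
  rewrite -sumq_nat natrM; field.
  by [].
rewrite hq; case: m m1 hm {hq} => [//|m] _ hm.
rewrite /= factS !natrM.
have h0 := fact_neq0 m; have h1 := natS_neq0 m; have h2 : (2 : R) != 0 by rewrite pnatr_eq0.
field; by rewrite h0 add1nat_neq0.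
Qed.

Lemma part1 (n p : nat) (u : R) : (1 <= p <= n)%N ->
     phi n p u = p%:R / n%:R * phi p p u + (1 - p%:R / n%:R) * u.
Proof.
move=> /andP[p1]; elim: n => [|n IH] pn; first lia.
have hp : p%:R != 0 :> R by rewrite pnatr_eq0 -lt0n.
case: (ltnP p n.+1) => hpn.
  have n1 : (1 <= n)%N by lia.
  rewrite phi_rec_lt //; last by rewrite p1; lia.
  rewrite IH; last lia.
  have hn : n%:R != 0 :> R by rewrite pnatr_eq0 -lt0n.
  have := natS_neq0 n => h1.
  rewrite -nat1r; field; by rewrite hn add1nat_neq0.
have -> : p = n.+1 by lia.
by rewrite divff ?natS_neq0 // mul1r subrr mul0r addr0.
Qed.

Lemma part2 (n : nat) (u : R) : (2 <= n)%N ->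
     phi n n u = u / n%:R * (1 + \sum_(1 <= p < n) phi n.-1 p u).
Proof. by case: n => [|[|n]] // _; rewrite phi_rec_eq. Qed.

Lemma part3 (n p : nat) (u : R) : (1 <= p <= n)%N -> u != 2 -> phi n p u = F n p u.
Proof.
move=> hpn u2; have h2u : 2 - u != 0 by rewrite subr_eq0 eq_sym.
elim: n {-2}n (leqnn n) p hpn => [|N IH] n nN p /andP[p1 pn]; first lia.
have hp : p%:R != 0 :> R by rewrite pnatr_eq0 -lt0n.
case: (ltnP p n) => hlt.
  rewrite part1 ?p1 // IH ?p1 //; try lia.
  have hn : n%:R != 0 :> R by rewrite pnatr_eq0; lia.
  rewrite /F subnn.
  have -> : (n - p).+1 = (n.+1 - p)%N by lia.
  rewrite natrB; last lia.
  rewrite -nat1r.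
  field; by rewrite fact_neq0 hn hp h2u.
have e : n = p by lia.
rewrite e in nN pn hlt *; clear e n.
case: p p1 pn hlt hp IH nN => [//|[|m]] _ _ _ hp IH nN.
  by rewrite phi_one /F /= big_geq // !mulr1n !divr1 subrr mulr0 addr0 mul1r.
rewrite phi_rec_eq //.
rewrite (@eq_big_nat _ _ _ 1 m.+2 _ (fun q => F m.+1 q u)); last first.
  move=> q hq; apply: IH; lia.
rewrite sumF // /F subnn -/(P m.+2 u) PQ // (factS m.+1) (factS m) !natrM.
have h0 := fact_neq0 m; have h2 : (2:R) != 0 by rewrite pnatr_eq0.
field; by rewrite h0 h2u add1nat_neq0 addnat_neq0.
Qed.
End Real.

Unset Implicit Arguments.

Theorem mainTheorem6 (R : numFieldType) :
  (forall (n p : nat) (u : R), (1 <= p <= n)%N ->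
     phi n p u = p%:R / n%:R * phi p p u + (1 - p%:R / n%:R) * u)
  /\ (forall (n : nat) (u : R), (2 <= n)%N ->
     phi n n u = u / n%:R * (1 + \sum_(1 <= p < n) phi n.-1 p u))
  /\ (forall (n p : nat) (u : R), (1 <= p <= n)%N -> u != 2 ->
     phi n p u =
       (n - p).+1%:R / n%:R * u
       + p%:R / n%:R * (u ^+ 2 / (2 - u))
         * (1 - (\prod_(0 <= k < p.-1) (u + k%:R)) / (p`!)%:R)).
Proof.
split; first exact: part1.
split; first exact: part2.
move=> n p u hp hu; exact: part3.
Qed.
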